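(* Let $H$ be a connected graph with $k=|V(H)|>1$ vertices that does not contain two false twins. Then no deterministic online algorithm (without advice) solving the Delayed Connected $H$-Node-Deletion Problem has competitive ratio smaller than $k$.
   Context: All graphs are finite, simple and undirected. Two distinct vertices are false twins if they have the same open neighborhood (in particular they are non-adjacent). An induced copy of $H$ in $G$ is an induced subgraph isomorphic to $H$; $G$ is $H$-free if it has none. An online graph $G$ has vertices $v_1,\dots,v_n$ revealed one at a time (with edges to earlier vertices); $G_t=G[\{v_1,\dots,v_t\}]$. Delayed Connected $H$-Node-Deletion Problem (for a fixed connected $H$): an online algorithm must choose sets $S_1\subseteq\dots\subseteq S_n$ with $S_t\subseteq V(G_t)$ and $G_t-S_t$ $H$-free for each $t$, where $S_t$ depends only on $G_t$; the cost is $|S_n|$. $\mathrm{OPT}(G)$ is the minimum size of $S\subseteq V(G)$ with $G-S$ $H$-free. An algorithm is $c$-competitive if there is a constant $\alpha\ge0$ with cost $\le c\cdot \mathrm{OPT}(G)+\alpha$ for every online graph $G$; its competitive ratio is the infimum of such $c\ge1$. *)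

(* Defs.v *)
From mathcomp Require Import all_boot.
From Stdlib Require Import Reals.

Set Implicit Arguments.
Unset Strict Implicit.
Unset Printing Implicit Defensive.

(* An online graph: vertices v_1,...,v_n are the naturals 0,...,n-1
   (vertex i is the (i+1)-th revealed vertex); its edges are given by a
   symmetric irreflexive relation e on nat (only pairs below n matter).
   G_t is the induced subgraph on {0,...,t-1}. *)
Definition online_graph (e : rel nat) : Prop := symmetric e /\ irreflexive e.

Definition induced_copy (V : finType) (hadj : rel V)
  (t : nat) (e : rel nat) (S : pred nat) : Prop :=
  exists f : V -> nat,
    injective f /\
    (forall x, f x < t /\ ~~ S (f x)) /\
    (forall x y, hadj x y = e (f x) (f y)).

Definition H_free (V : finType) (hadj : rel V)
  (t : nat) (e : rel nat) (S : pred nat) : Prop :=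
  ~ induced_copy hadj t e S.

Definition same_prefix (t : nat) (e e' : rel nat) : Prop :=
  forall i j, i < t -> j < t -> e i j = e' i j.

(* A deterministic online algorithm: given t and the online graph, it outputs
   S_t; S_t may only depend on G_t. *)
Definition online_algorithm := nat -> rel nat -> pred nat.

Definition valid_algorithm (V : finType) (hadj : rel V)
  (A : online_algorithm) : Prop :=
  (forall t e e', online_graph e -> online_graph e' -> same_prefix t e e' ->
     A t e =1 A t e') /\
  (forall t e, online_graph e -> forall i, A t e i -> i < t) /\
  (forall t e, online_graph e -> forall i, A t e i -> A t.+1 e i) /\
  (forall t e, online_graph e -> H_free hadj t e (A t e)).

Definition card_below (S : pred nat) (n : nat) : nat := count S (iota 0 n).

Definition cost (A : online_algorithm) (n : nat) (e : rel nat) : nat :=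
  card_below (A n e) n.

Definition feasible (V : finType) (hadj : rel V) (n : nat) (e : rel nat)
  (S : pred nat) : Prop :=
  (forall i, S i -> i < n) /\ H_free hadj n e S.

Definition is_OPT (V : finType) (hadj : rel V) (n : nat) (e : rel nat)
  (m : nat) : Prop :=
  (exists S, feasible hadj n e S /\ card_below S n = m) /\
  (forall S, feasible hadj n e S -> m <= card_below S n).

Definition c_competitive (V : finType) (hadj : rel V) (A : online_algorithm)
  (c : R) : Prop :=
  exists alpha : R, (0 <= alpha)%R /\
    forall n e m, online_graph e -> is_OPT hadj n e m ->
      (INR (cost A n e) <= c * INR m + alpha)%R.

(* Main.v *)
Require Import Defs.
From mathcomp Require Import all_boot.
From Stdlib Require Import Reals Lra Lia Classical.
From mathcomp Require Import zify.
Set Implicit Arguments.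
Unset Strict Implicit.

Section Proof.
Variables (V : finType) (hadj : rel V).
Hypotheses (hsym : symmetric hadj) (hirr : irreflexive hadj)
  (htw : forall x y, (forall z, hadj x z = hadj y z) -> x = y).
Variable A : online_algorithm.
Hypothesis hA : valid_algorithm hadj A.
Variable x0 : V.

Definition el (l : seq V) : rel nat := fun i j => hadj (nth x0 l i) (nth x0 l j).

Lemma og_cls (cls : nat -> V) : online_graph (fun i j => hadj (cls i) (cls j)).
Proof. split; [by move=> i j /=; rewrite hsym | by move=> i /=; rewrite hirr]. Qed.

Definition next (l : seq V) : V :=
  odflt x0 [pick w | [forall i : 'I_(size l), (nth x0 l i == w) ==> A (size l) (el l) i]].

Lemma next_spec l : forall i, i < size l -> nth x0 l i = next l -> A (size l) (el l) i.
Proof.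
rewrite /next; case: pickP => [w /forallP Hw /= | H].
  move=> i Hi Hnth; have := Hw (Ordinal Hi); by rewrite /= Hnth eqxx.
exfalso.
have [_ [_ [_ Hfree]]] := hA.
apply: (Hfree (size l) (el l) (og_cls _)).
pose f (w : V) : nat := odflt 0 (omap (@nat_of_ord _)
   [pick i : 'I_(size l) | (nth x0 l i == w) && ~~ A (size l) (el l) i]).
have Hf : forall w, [/\ f w < size l, nth x0 l (f w) = w & ~~ A (size l) (el l) (f w)].
  move=> w; rewrite /f; case: pickP => [i /andP [/eqP H1 H2] | H0] /=.
    by split.
  have := H w; move/negbT/forallPn => [i]; rewrite negb_imply => /andP [H1 H2].
  by have := H0 i; rewrite H1 H2.
exists f; split.
  move=> a b Hab; have [_ Ha _] := Hf a; have [_ Hb _] := Hf b.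
  by rewrite -Ha -Hb Hab.
split; first by move=> w; have [? ? ?] := Hf w.
move=> a b; rewrite /el; by case: (Hf a) => _ -> _; case: (Hf b) => _ -> _.
Qed.

Fixpoint L (n : nat) : seq V := if n is m.+1 then rcons (L m) (next (L m)) else [::].

Lemma size_L n : size (L n) = n.
Proof. by elim: n => //= n IH; rewrite size_rcons IH. Qed.

Definition cls i := next (L i).
Definition eG : rel nat := fun i j => hadj (cls i) (cls j).

Lemma nth_L n i : i < n -> nth x0 (L n) i = cls i.
Proof.
elim: n => // n IH Hi /=; rewrite nth_rcons size_L.
have [H|H|H] := ltngtP i n; [exact: IH|lia|by rewrite H].
Qed.

Lemma A_L t : A t (el (L t)) =1 A t eG.
Proof.
have [Hdep _] := hA; apply: Hdep; try exact: og_cls.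
move=> i j Hi Hj; by rewrite /el /eG !nth_L.
Qed.

Lemma A_mono t t' i : t <= t' -> A t eG i -> A t' eG i.
Proof.
move=> /subnK <-; elim: (t' - t) => // d IH H.
have [_ [_ [Hm _]]] := hA; rewrite addSn; apply: Hm; first exact: og_cls.
exact: IH.
Qed.

Lemma cls_del i j t : i < j -> j <= t -> cls i = cls j -> A t eG i.
Proof.
move=> Hij Hjt Hc; apply: (A_mono Hjt). rewrite -A_L.
have := @next_spec (L j) i; rewrite size_L; apply => //.
by rewrite nth_L.
Qed.

Lemma undel_count t : t - #|V| <= count (A t eG) (iota 0 t).
Proof.
have := count_predC (A t eG) (iota 0 t); rewrite size_iota.
rewrite -(size_filter (predC (A t eG))).
set s := filter _ (iota 0 t) => Hc.
suff : size s <= #|V| by lia.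
have Hu : uniq (map cls s).
  rewrite map_inj_in_uniq ?filter_uniq ?iota_uniq //.
  move=> i j Hi' Hj' Hcl; move: Hi' Hj'; rewrite /s !mem_filter !mem_iota /=.
  move=> /andP [Hi Hit] /andP [Hj Hjt].
  have [H|H|H] := ltngtP i j => //.
    by move: Hi; rewrite (cls_del H (ltnW Hjt) Hcl).
  by move: Hj; rewrite (cls_del H (ltnW Hit) (esym Hcl)).
by rewrite -(size_map cls) -(card_uniqP Hu) max_card.
Qed.

Definition Sw N w : pred nat := fun i => (i < N) && (cls i == w).

Lemma Sw_feasible N w : feasible hadj N eG (Sw N w).
Proof.
split; first by move=> i /andP [].
move=> [f [_ [Hf Hadj]]].
have Hinj : injective (cls \o f).
  move=> a b /= Hab; apply: htw => z; rewrite !Hadj /eG; by rewrite Hab.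
have [g _ Hg] := injF_bij Hinj.
have [Hlt Hn] := Hf (g w); move: Hn; rewrite /Sw Hlt /=.
by have := Hg w; rewrite /= => ->; rewrite eqxx.
Qed.

Lemma card_Sw N w : card_below (Sw N w) N = count (fun i => cls i == w) (iota 0 N).
Proof. apply: eq_in_count => i; rewrite mem_iota /Sw /= => ->. by []. Qed.

Lemma sum_counts (s : seq nat) : \sum_(w : V) count (fun i => cls i == w) s = size s.
Proof.
elim: s => [|a s IH] /=; first by rewrite big1.
rewrite big_split /= IH (bigD1 (cls a)) //= eqxx big1 // => w Hw.
by rewrite eq_sym (negbTE Hw).
Qed.

End Proof.

Lemma opt_exists (P : nat -> Prop) n0 : P n0 -> exists m, P m /\ forall m', P m' -> m <= m'.
Proof.
elim: n0 {-2}n0 (leqnn n0) => [|n IH] k Hk Pk.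
  exists k; split => // m' _; by move: Hk; rewrite leqn0 => /eqP ->.
destruct (classic (exists m', P m' /\ m' < k)) as [[m' [Pm' Hm']]|Hn].
  apply: (IH m') => //; lia.
exists k; split => // m' Pm'; rewrite leqNgt; apply/negP => H; apply: Hn; by exists m'.
Qed.

Theorem mainTheorem4 (V : finType) (hadj : rel V) :
  symmetric hadj -> irreflexive hadj ->
  1 < #|V| ->
  (forall x y, connect hadj x y) ->
  (forall x y, (forall z, hadj x z = hadj y z) -> x = y) ->
  forall A : online_algorithm, valid_algorithm hadj A ->
  forall c : R, (1 <= c)%R -> (c < INR #|V|)%R ->
  ~ c_competitive hadj A c.
Proof.
move=> hsym hirr Hk _ htw A hA c Hc1 Hck [alpha [Ha Hcomp]].
have [x0 _] : exists x0 : V, true.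
  case/card_gt0P: (ltnW Hk) => x _; by exists x.
set K := INR #|V|.
have HcK : (c < K)%R by [].
clear Hck.
have HK : (2 <= K)%R by rewrite /K; apply: (le_INR 2); apply/leP.
have [N [HN1 HN2]] : exists N : nat, (K * (K + alpha) < INR N * (K - c))%R /\ (0 < N)%coq_nat.
  have Heps : (0 < (K - c) / (K * (K + alpha)))%R.
    apply: Rdiv_lt_0_compat; [lra| apply: Rmult_lt_0_compat; lra].
  have [N [H1 H2]] := archimed_cor1 _ Heps.
  exists N; split => //.
  have HN : (0 < INR N)%R by apply: lt_0_INR.
  have HKa : (0 < K * (K + alpha))%R by apply: Rmult_lt_0_compat; lra.
  have := Rmult_lt_compat_l (INR N * (K * (K + alpha))) _ _ (Rmult_lt_0_compat _ _ HN HKa) H1.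
  have E1 : (INR N * (K * (K + alpha)) * / INR N = K * (K + alpha))%R.
    field; lra.
  have E2 : (INR N * (K * (K + alpha)) * ((K - c) / (K * (K + alpha))) = INR N * (K - c))%R.
    field; lra.
  rewrite E1 E2; lra.
set e := eG hadj A x0.
pose P m := exists S, feasible hadj N e S /\ card_below S N = m.
have [m [Pm Hmin]] := @opt_exists P _ (ex_intro _ _ (conj (Sw_feasible htw A x0 N x0) erefl)).
have Hopt : is_OPT hadj N e m.
  split => // S HS; apply: Hmin; by exists S.
have Hm : forall w, m <= count (fun i => cls hadj A x0 i == w) (iota 0 N).
  move=> w; rewrite -card_Sw; apply: Hmin; eexists; split; first exact: (Sw_feasible htw).
  reflexivity.
have HkM : #|V| * m <= N.
  rewrite -[X in _ <= X](size_iota 0 N) -(sum_counts hadj A x0) -sum_nat_const.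
  by apply: leq_sum => w _.
have Hcost : N <= cost A N e + #|V|.
  have := undel_count hsym hirr hA x0 N; rewrite /cost /card_below /e; lia.
have := Hcomp N e m (og_cls hsym hirr _) Hopt.
move/leP: Hcost => /le_INR; rewrite -plusE plus_INR => H1.
move/leP: HkM => /le_INR; rewrite -multE mult_INR => H2.
rewrite -/K in H1 H2 => H3.
have Hm0 : (0 <= INR m)%R by apply: pos_INR.
nra.
Qed.
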